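(* Let $k$ be a commutative ring and $H$ a Hopf algebra over $k$ that is finitely generated projective as a $k$-module. If $H$ is a separable $k$-algebra, then $H$ is an FH-algebra.
   Context: $H$ is an FH-algebra if it is a Frobenius $k$-algebra admitting a Frobenius homomorphism $H\to k$ that is a left integral in $H^*$, i.e. lies in $\int^\ell_{H^*}=\{f\in H^*: gf=g(1_H)f\ \forall g\in H^*\}$ (product in $H^*$ is convolution). *)

(* Defs.v *)
From HB Require Import structures.
From mathcomp Require Import all_boot all_algebra.
Set Implicit Arguments. Unset Strict Implicit. Unset Printing Implicit Defensive.
Import GRing.Theory.
Local Open Scope ring_scope.

Section Defs.
Variables (k : comNzRingType) (H : algType k).

(* An element of H (x) H is represented by a finite list of pure tensors
   [seq (a_i, b_i)] (standing for sum_i a_i (x) b_i).  Since H is f.g.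
   projective, such an element is determined by its pairings with all
   f (x) g, f g : H^*. *)
Definition pair2 (f g : H -> k) (s : seq (H * H)) : k :=
  \sum_(p <- s) f p.1 * g p.2.

Definition fin_gen : Prop :=
  exists s : seq H, forall x : H,
    exists c : 'I_(size s) -> k, x = \sum_(i < size s) c i *: s`_i.

Definition projective_mod : Prop :=
  forall (M N : lmodType k) (pi : {linear M -> N}) (f : {linear H -> N}),
    (forall n : N, exists m : M, pi m = n) ->
    exists g : {linear H -> M}, forall x : H, pi (g x) = f x.

Definition fgp : Prop := fin_gen /\ projective_mod.

Definition is_hopf (comul : H -> seq (H * H)) (counit : {scalar H})
    (antipode : {linear H -> H}) : Prop :=
  [/\
      forall (f g : {scalar H}) (a : k) (x y : H),
        pair2 f g (comul (a *: x + y)) = a * pair2 f g (comul x) + pair2 f g (comul y),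
      forall (f g l : {scalar H}) (x : H),
        \sum_(p <- comul x) pair2 f g (comul p.1) * l p.2
        = \sum_(p <- comul x) f p.1 * pair2 g l (comul p.2),
      forall x : H, \sum_(p <- comul x) counit p.1 *: p.2 = x
                 /\ \sum_(p <- comul x) counit p.2 *: p.1 = x,
      (forall (f g : {scalar H}) (x y : H),
         pair2 f g (comul (x * y))
         = \sum_(p <- comul x) \sum_(q <- comul y) f (p.1 * q.1) * g (p.2 * q.2))
      /\ (forall f g : {scalar H}, pair2 f g (comul 1) = f 1 * g 1)
      /\ (forall x y : H, counit (x * y) = counit x * counit y) /\ counit 1 = 1
    &
      forall x : H, \sum_(p <- comul x) antipode p.1 * p.2 = counit x *: 1
                 /\ \sum_(p <- comul x) p.1 * antipode p.2 = counit x *: 1].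

Definition separable_alg : Prop :=
  exists e : seq (H * H),
    \sum_(p <- e) p.1 * p.2 = 1 /\
    forall (a : H) (f g : {scalar H}),
      pair2 f g [seq (a * p.1, p.2) | p <- e] = pair2 f g [seq (p.1, p.2 * a) | p <- e].

Definition frobenius_hom (phi : {scalar H}) : Prop :=
  (forall x x' : H, (forall y, phi (x * y) = phi (x' * y)) -> x = x') /\
  (forall g : {scalar H}, exists x : H, forall y, phi (x * y) = g y).

Definition frobenius_alg : Prop := fgp /\ exists phi, frobenius_hom phi.

(* Left integral in H^* for the convolution product (g f)(h) = sum g(h1) f(h2). *)
Definition left_integral (comul : H -> seq (H * H)) (f : {scalar H}) : Prop :=
  forall (g : {scalar H}) (h : H),
    \sum_(p <- comul h) g p.1 * f p.2 = g 1 * f h.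

Definition FH_alg (comul : H -> seq (H * H)) : Prop :=
  frobenius_alg /\ exists phi, frobenius_hom phi /\ left_integral comul phi.

End Defs.

(* Main.v *)
From HB Require Import structures.
Require Import Defs.
From mathcomp Require Import all_boot all_algebra.
From mathcomp Require Import ring.
Set Implicit Arguments. Unset Strict Implicit. Unset Printing Implicit Defensive.
Import GRing.Theory.
Local Open Scope ring_scope.

Section Basic.
Variables (k : comNzRingType) (H : algType k).
Definition lin (φ : H -> k) := forall a u v, φ (a *: u + v) = a * φ u + φ v.
Definition mksc (φ : H -> k) (hφ : lin φ) : {scalar H} :=
  HB.pack φ (GRing.isLinear.Build k H k *%R φ hφ).
Arguments mksc : simpl never.
Lemma mkscE φ (hφ : lin φ) x : mksc hφ x = φ x. Proof. by []. Qed.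
Lemma lin_sc (f : {scalar H}) : lin f. Proof. by move=> a u v; rewrite linearP. Qed.

Lemma lin_sumE φ I (r : seq I) (F : I -> H) : lin φ -> φ (\sum_(i <- r) F i) = \sum_(i <- r) φ (F i).
Proof. move=> hφ; exact: (linear_sum (mksc hφ)). Qed.
Lemma lin_scaleE φ a u : lin φ -> φ (a *: u) = a * φ u.
Proof. move=> hφ; have := hφ a u 0; rewrite addr0 => ->. by have := linear0 (mksc hφ); rewrite mkscE => ->; rewrite addr0. Qed.
Lemma lin_addE φ u v : lin φ -> φ (u + v) = φ u + φ v.
Proof. move=> hφ; exact: (linearD (mksc hφ)). Qed.
Lemma lin0E φ : lin φ -> φ 0 = 0.
Proof. move=> hφ; exact: (linear0 (mksc hφ)). Qed.

Definition sw (s : seq (H * H)) (F : H -> H -> k) := \sum_(p <- s) F p.1 p.2.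
Lemma swE s F : sw s F = \sum_(p <- s) F p.1 p.2. Proof. by []. Qed.
Lemma eq_sw s F G : (forall u v, F u v = G u v) -> sw s F = sw s G.
Proof. by move=> e; apply: eq_bigr => p _; rewrite e. Qed.

Lemma lin_sw (s : seq (H * H)) (G : H -> H -> H -> k) :
  (forall a b, lin (fun w => G w a b)) -> lin (fun w => sw s (G w)).
Proof.
move=> hG r u v; rewrite /sw mulr_sumr -big_split /=; apply: eq_bigr => p _.
exact: hG.
Qed.
Lemma lin_bsum I (s : seq I) (G : H -> I -> k) :
  (forall i, lin (fun w => G w i)) -> lin (fun w => \sum_(i <- s) G w i).
Proof.
move=> hG r u v; rewrite mulr_sumr -big_split /=; apply: eq_bigr => p _.
exact: hG.
Qed.
Lemma lin_mulr φ (x : k) : lin φ -> lin (fun w => φ w * x).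
Proof. by move=> h r u v; rewrite h mulrDl mulrA. Qed.
Lemma lin_mull φ (x : k) : lin φ -> lin (fun w => x * φ w).
Proof. by move=> h r u v; rewrite h mulrDr !mulrA [x * r]mulrC. Qed.

Lemma sum_pull3 I J K L (r1 : seq I) (r2 : seq J) (r3 : seq K) (r4 : seq L) (F : I -> J -> K -> L -> k) :
  \sum_(a <- r1) \sum_(b <- r2) \sum_(c <- r3) \sum_(d <- r4) F a b c d =
  \sum_(b <- r2) \sum_(c <- r3) \sum_(d <- r4) \sum_(a <- r1) F a b c d.
Proof.
rewrite exchange_big; apply: eq_bigr => b _; rewrite exchange_big; apply: eq_bigr => c _.
by rewrite exchange_big.
Qed.

Lemma sum_rot3 I J K (r1 : seq I) (r2 : seq J) (r3 : seq K) (F : I -> J -> K -> k) :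
  \sum_(a <- r1) \sum_(b <- r2) \sum_(c <- r3) F a b c =
  \sum_(b <- r2) \sum_(c <- r3) \sum_(a <- r1) F a b c.
Proof. rewrite exchange_big; apply: eq_bigr => b _; by rewrite exchange_big. Qed.

Definition bilin (F : H -> H -> k) := (forall v, lin (F^~ v)) /\ (forall u, lin (F u)).
Definition trilin (F : H -> H -> H -> k) :=
  [/\ forall v w, lin (fun u => F u v w), forall u w, lin (fun v => F u v w)
    & forall u v, lin (F u v)].

Variables (n : nat) (b : 'I_n -> H) (c : 'I_n -> {scalar H}).
Hypothesis db : forall x, x = \sum_i c i x *: b i.

Lemma expand φ x : lin φ -> φ x = \sum_i c i x * φ (b i).
Proof.
move=> hφ; rewrite {1}(db x) lin_sumE //; apply: eq_bigr => i _.
by rewrite lin_scaleE.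
Qed.

Lemma sep u v : (forall i, c i u = c i v) -> u = v.
Proof. by move=> e; rewrite (db u) (db v); apply: eq_bigr => i _; rewrite e. Qed.

Lemma sw_expand s F : bilin F ->
  sw s F = \sum_i \sum_j pair2 (c i) (c j) s * F (b i) (b j).
Proof.
case=> F1 F2; rewrite /sw /pair2.
have -> : \sum_(p <- s) F p.1 p.2 =
   \sum_(p <- s) \sum_i \sum_j (c i p.1 * c j p.2) * F (b i) (b j).
  apply: eq_bigr => p _; rewrite (expand p.1 (F1 p.2)); apply: eq_bigr => i _.
  rewrite (expand p.2 (F2 (b i))) mulr_sumr; apply: eq_bigr => j _; ring.
rewrite exchange_big; apply: eq_bigr => i _; rewrite exchange_big.
by apply: eq_bigr => j _; rewrite mulr_suml.
Qed.

Lemma sw_eqv s s' F : (forall f g : {scalar H}, pair2 f g s = pair2 f g s') ->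
  bilin F -> sw s F = sw s' F.
Proof. by move=> e hF; rewrite !sw_expand //; do 2 (apply: eq_bigr => ? _); rewrite e. Qed.


Lemma trilin12 F w : trilin F -> bilin (fun u v => F u v w).
Proof. by case=> F1 F2 F3; split=> [v|u]; [apply: F1|apply: F2]. Qed.
Lemma trilin23 F u : trilin F -> bilin (F u).
Proof. by case=> F1 F2 F3; split=> [w|v]; [apply: F2|apply: F3]. Qed.

Variables (D : H -> seq (H * H)) (eps : {scalar H}) (S : {linear H -> H}).
Hypothesis hDlin : forall (f g : {scalar H}) (a : k) (x y : H),
        pair2 f g (D (a *: x + y)) = a * pair2 f g (D x) + pair2 f g (D y).
Hypothesis hcoass : forall (f g l : {scalar H}) (x : H),
        \sum_(p <- D x) pair2 f g (D p.1) * l p.2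
        = \sum_(p <- D x) f p.1 * pair2 g l (D p.2).
Hypothesis hcounit : forall x : H, \sum_(p <- D x) eps p.1 *: p.2 = x
                 /\ \sum_(p <- D x) eps p.2 *: p.1 = x.
Hypothesis hDmul : forall (f g : {scalar H}) (x y : H),
         pair2 f g (D (x * y))
         = \sum_(p <- D x) \sum_(q <- D y) f (p.1 * q.1) * g (p.2 * q.2).
Hypothesis hD1 : forall f g : {scalar H}, pair2 f g (D 1) = f 1 * g 1.
Hypothesis hem : forall x y : H, eps (x * y) = eps x * eps y.
Hypothesis he1 : eps 1 = 1.
Hypothesis hS : forall x : H, \sum_(p <- D x) S p.1 * p.2 = eps x *: 1
                 /\ \sum_(p <- D x) p.1 * S p.2 = eps x *: 1.

Lemma Dlin F : bilin F -> lin (fun x => sw (D x) F).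
Proof.
move=> hF a x y; rewrite !sw_expand // mulr_sumr -big_split; apply: eq_bigr => i _.
rewrite mulr_sumr -big_split; apply: eq_bigr => j _; rewrite hDlin /=; ring.
Qed.

Lemma coassoc F x : trilin F ->
  sw (D x) (fun u w => sw (D u) (fun a b' => F a b' w)) =
  sw (D x) (fun u v => sw (D v) (F u)).
Proof.
move=> hF; have [F1 F2 F3] := hF.
transitivity (\sum_i \sum_j \sum_l (\sum_(p <- D x) pair2 (c i) (c j) (D p.1) * c l p.2) * F (b i) (b j) (b l)).
  rewrite swE.
  under eq_bigr => p _ do rewrite (sw_expand _ (trilin12 p.2 hF)).
  rewrite [LHS]exchange_big; apply: eq_bigr => i _.
  rewrite [LHS]exchange_big; apply: eq_bigr => j _.
  under [LHS]eq_bigr => p _ do rewrite (expand p.2 (F3 (b i) (b j))) mulr_sumr.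
  rewrite [LHS]exchange_big; apply: eq_bigr => l _.
  by rewrite mulr_suml; apply: eq_bigr => p _; rewrite /pair2; ring.
transitivity (\sum_i \sum_j \sum_l (\sum_(p <- D x) c i p.1 * pair2 (c j) (c l) (D p.2)) * F (b i) (b j) (b l)).
  by do 3 (apply: eq_bigr => ? _); rewrite hcoass.
rewrite swE.
transitivity (\sum_(p <- D x) \sum_i \sum_j \sum_l c i p.1 * pair2 (c j) (c l) (D p.2) * F (b i) (b j) (b l)).
  rewrite [RHS]sum_pull3; do 3 (apply: eq_bigr => ? _); by rewrite mulr_suml.
apply: eq_bigr => p _; rewrite (sw_expand _ (trilin23 p.1 hF)).
rewrite sum_rot3; apply: eq_bigr => j _; apply: eq_bigr => l _.
rewrite (expand p.1 (F1 _ _)) mulr_sumr; apply: eq_bigr => i _ /=; ring.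
Qed.

Lemma bexpand F u v : bilin F -> F u v = \sum_i \sum_j c i u * c j v * F (b i) (b j).
Proof.
case=> F1 F2; rewrite (expand u (F1 v)); apply: eq_bigr => i _.
rewrite (expand v (F2 (b i))) mulr_sumr; apply: eq_bigr => j _; ring.
Qed.

Lemma counit_l G x : lin G -> sw (D x) (fun u v => eps u * G v) = G x.
Proof.
move=> hG; rewrite -{2}(proj1 (hcounit x)) lin_sumE //; apply: eq_bigr => p _.
by rewrite lin_scaleE.
Qed.
Lemma counit_r G x : lin G -> sw (D x) (fun u v => G u * eps v) = G x.
Proof.
move=> hG; rewrite -{2}(proj2 (hcounit x)) lin_sumE //; apply: eq_bigr => p _.
by rewrite lin_scaleE // mulrC.
Qed.
Lemma antip_l G x : lin G -> sw (D x) (fun u v => G (S u * v)) = eps x * G 1.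
Proof.
move=> hG; rewrite -lin_scaleE // -(proj1 (hS x)) lin_sumE //.
Qed.
Lemma antip_r G x : lin G -> sw (D x) (fun u v => G (u * S v)) = eps x * G 1.
Proof.
move=> hG; rewrite -lin_scaleE // -(proj2 (hS x)) lin_sumE //.
Qed.

Lemma Dmul F x y : bilin F ->
  sw (D (x * y)) F = sw (D x) (fun a a' => sw (D y) (fun d d' => F (a * d) (a' * d'))).
Proof.
move=> hF; rewrite sw_expand //.
under eq_bigr => i _ do under eq_bigr => j _ do rewrite hDmul mulr_suml.
transitivity (\sum_(p <- D x) \sum_i \sum_j \sum_(q <- D y)
   c i (p.1 * q.1) * c j (p.2 * q.2) * F (b i) (b j)).
  rewrite [RHS]sum_rot3.
  by apply: eq_bigr => i _; apply: eq_bigr => j _; apply: eq_bigr => p _; rewrite mulr_suml.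
rewrite swE; apply: eq_bigr => p _; rewrite swE -sum_rot3.
by apply: eq_bigr => q _; rewrite (bexpand _ _ hF).
Qed.

Lemma D1 F : bilin F -> sw (D 1) F = F 1 1.
Proof.
move=> hF; rewrite sw_expand // (bexpand 1 1 hF).
by do 2 (apply: eq_bigr => ? _); rewrite hD1.
Qed.



Definition linH (T : H -> H) := forall a u v, T (a *: u + v) = a *: T u + T v.

Lemma lin_swD G T : bilin G -> linH T -> lin (fun w => sw (D (T w)) G).
Proof. by move=> hG hT a u v; rewrite hT (Dlin hG). Qed.

Lemma lin_swD1 G : bilin G -> lin (fun w => sw (D w) G).
Proof. by move=> hG; apply: Dlin. Qed.

Lemma lin_bl F T y : bilin F -> linH T -> lin (fun w => F (T w) y).
Proof. by case=> h1 h2 hT a u v; rewrite hT h1. Qed.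
Lemma lin_br F T y : bilin F -> linH T -> lin (fun w => F y (T w)).
Proof. by case=> h1 h2 hT a u v; rewrite hT h2. Qed.
Lemma lin_c G T : lin G -> linH T -> lin (fun w => G (T w)).
Proof. by move=> h1 hT a u v; rewrite hT h1. Qed.

Ltac linHT := let r := fresh "r" in let u := fresh "u" in let v := fresh "v" in
  move=> r u v /=;
  repeat (first [rewrite linearP | rewrite mulrDr | rewrite mulrDl | rewrite -scalerAr | rewrite -scalerAl]);
  by [].

Ltac linT :=
  cbv beta;
  match goal with
  | h : ?P |- ?P => exact h
  | |- bilin _ => split => ?; linT
  | |- trilin _ => split => ? ?; linT
  | |- lin (fun _ => sw _ _) =>
      first [ apply: lin_sw => ? ?; linT
            | apply: lin_swD1; linT
            | apply: lin_swD; [linT | linHT] ]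
  | |- lin (fun _ => \sum_(_ <- _) _) => apply: lin_bsum => ?; linT
  | |- lin (fun _ => \sum_(_ < _) _) => apply: lin_bsum => ?; linT
  | |- lin (fun _ => _ * _) =>
      first [ apply: lin_mulr; linT | apply: lin_mull; linT | linbase ]
  | hF : bilin ?F |- lin (fun _ => ?F _ _) =>
      first [ apply: (lin_bl _ hF); linHT | apply: (lin_br _ hF); linHT ]
  | hG : lin ?G |- lin (fun _ => ?G _) => apply: (lin_c hG); linHT
  | |- lin _ => linbase
  end
with linbase := let r := fresh "r" in let u := fresh "u" in let v := fresh "v" in
  move=> r u v; cbv beta;
  repeat (first [rewrite linearP | rewrite mulrDr | rewrite mulrDl | rewrite -scalerAr | rewrite -scalerAl]);
  ring.

Lemma test1 (f g : {scalar H}) y : bilin (fun u v => f (S u * y) * g (v * S y)).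
Proof. linT. Qed.
Lemma test2 (f g : {scalar H}) y : trilin (fun u v w => sw (D (S u)) (fun a b => f (a * v) * g (b * S w * y))).
Proof. linT. Qed.



Lemma epsS x : eps (S x) = eps x.
Proof.
have := antip_l x (lin_sc eps); rewrite he1 mulr1 => <-.
under eq_sw => u v do rewrite hem.
by rewrite (counit_r x (G := fun u => eps (S u))) //; linT.
Qed.

Lemma DX F z : bilin F ->
  sw (D z) (fun m m' => sw (D m) (fun m1 m2 => sw (D m') (fun n1 n2 => F (m1 * S n2) (m2 * S n1))))
  = eps z * F 1 1.
Proof.
move=> hF.
rewrite (coassoc z (F := fun m1 m2 m' => sw (D m') (fun n1 n2 => F (m1 * S n2) (m2 * S n1)))); last linT.
transitivity (sw (D z) (fun m1 q => F (m1 * S q) 1)); last first.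
  by rewrite (antip_r z (G := fun w => F w 1)) //; linT.
apply: eq_sw => m1 q.
rewrite -(coassoc q (F := fun m2 n1 n2 => F (m1 * S n2) (m2 * S n1))); last linT.
transitivity (sw (D q) (fun r n2 => eps r * F (m1 * S n2) 1)); last first.
  by rewrite (counit_l q (G := fun n2 => F (m1 * S n2) 1)) //; linT.
apply: eq_sw => r n2.
by rewrite (antip_r r (G := fun w => F (m1 * S n2) w)) //; linT.
Qed.



Lemma sw_exch s s' (G : H -> H -> H -> H -> k) :
  sw s (fun u v => sw s' (G u v)) = sw s' (fun x y => sw s (fun u v => G u v x y)).
Proof. by rewrite /sw exchange_big. Qed.

Lemma sw_mull s (x : k) F : x * sw s F = sw s (fun u v => x * F u v).
Proof. by rewrite /sw mulr_sumr. Qed.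
Lemma sw_mulr s (x : k) F : sw s F * x = sw s (fun u v => F u v * x).
Proof. by rewrite /sw mulr_suml. Qed.

Lemma Santi_pair (f g : {scalar H}) a :
  sw (D (S a)) (fun u v => f u * g v) = sw (D a) (fun u v => f (S v) * g (S u)).
Proof.
rewrite -(counit_r a (G := fun u => sw (D (S u)) (fun u v => f u * g v))); last linT.
transitivity (sw (D a) (fun a1 a2 => sw (D a2) (fun m m' =>
  sw (D (S a1)) (fun s s' => sw (D m) (fun m1 m2 => sw (D m') (fun n1 n2 =>
     f (s * (m1 * S n2)) * g (s' * (m2 * S n1)))))))).
  apply: eq_sw => a1 a2; rewrite sw_mulr sw_exch; apply: eq_sw => s s'.
  rewrite (DX a2 (F := fun x y => f (s * x) * g (s' * y))); last linT.
  by rewrite !mulr1 mulrC.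
rewrite -(coassoc a (F := fun a1 m m' => sw (D (S a1)) (fun s s' => sw (D m) (fun m1 m2 =>
   sw (D m') (fun n1 n2 => f (s * (m1 * S n2)) * g (s' * (m2 * S n1))))))); last linT.
transitivity (sw (D a) (fun p m' => eps p * sw (D m') (fun n1 n2 => f (S n2) * g (S n1)))); last first.
  by rewrite (counit_l a (G := fun m' => sw (D m') (fun n1 n2 => f (S n2) * g (S n1)))) //; linT.
apply: eq_sw => p m'.
rewrite sw_mull.
under eq_sw => a1 m do (under eq_sw => s s' do rewrite sw_exch; rewrite sw_exch).
rewrite sw_exch; apply: eq_sw => n1 n2.
pose F' := fun x y => f (x * S n2) * g (y * S n1).
transitivity (sw (D p) (fun a1 m => sw (D (S a1 * m)) F')).
  apply: eq_sw => a1 m; rewrite Dmul; last by rewrite /F'; linT.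
  by do 2 (apply: eq_sw => ? ?); rewrite /F' !mulrA.
rewrite (antip_l p (G := fun z => sw (D z) F')); last by rewrite /F'; linT.
by rewrite D1 /F' ?mul1r //; linT.
Qed.



Lemma Santi F a : bilin F -> sw (D (S a)) F = sw (D a) (fun u v => F (S v) (S u)).
Proof.
move=> hF; rewrite sw_expand //.
transitivity (\sum_i \sum_j sw (D a) (fun u v => c i (S v) * c j (S u) * F (b i) (b j))).
  apply: eq_bigr => i _; apply: eq_bigr => j _.
  by rewrite -sw_mulr -Santi_pair.
symmetry; rewrite swE; under eq_bigr => p _ do rewrite (bexpand _ _ hF).
rewrite exchange_big; apply: eq_bigr => i _; rewrite exchange_big; apply: eq_bigr => j _.
by rewrite swE.
Qed.



Lemma compat (g φ : {scalar H}) x h :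
  sw (D x) (fun u v => g u * φ (v * S h)) =
  sw (D h) (fun h1 h2 => sw (D (x * S h1)) (fun w1 w2 => g (w1 * h2) * φ w2)).
Proof.
symmetry.
transitivity (sw (D h) (fun h1 h2 => sw (D x) (fun x1 x2 => sw (D h1) (fun m m' =>
   g (x1 * S m' * h2) * φ (x2 * S m))))).
  apply: eq_sw => h1 h2; rewrite Dmul; last linT.
  apply: eq_sw => x1 x2; rewrite Santi; last linT.
  by apply: eq_sw => m m'.
rewrite sw_exch.
apply: eq_sw => x1 x2.
rewrite (coassoc h (F := fun m m' h2 => g (x1 * S m' * h2) * φ (x2 * S m))); last linT.
transitivity (sw (D h) (fun m r => φ (x2 * S m) * eps r * g x1)).
  apply: eq_sw => m r.
  under eq_sw => u v do rewrite -mulrA.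
  rewrite (antip_l r (G := fun w => g (x1 * w) * φ (x2 * S m))); last linT.
  by rewrite mulr1; ring.
rewrite -sw_mulr (counit_r h (G := fun m => φ (x2 * S m))); last linT.
by rewrite mulrC.
Qed.



Lemma trace_step (Z : H -> H) (G : H -> H -> k) :
  linH Z -> bilin G ->
  \sum_i sw (D (b i)) (fun u v => sw (D (Z v)) (fun w1 w2 => G u w1 * c i w2)) =
  \sum_l sw (D (Z (b l))) (fun w1 w2 => sw (D w2) (fun y1 y2 => G y1 w1 * c l y2)).
Proof.
move=> hZ [G1 G2].
have hB : forall i, bilin (fun u v => sw (D (Z v)) (fun w1 w2 => G u w1 * c i w2)).
  move=> i; split=> [v|u]; first by apply: lin_sw => w1 w2; apply: lin_mulr; apply: G1.
  by apply: lin_swD => //; split=> [w|w]; [apply: lin_mulr; apply: G2 | apply: lin_mull; apply: lin_sc].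
under eq_bigr => i _ do rewrite (sw_expand _ (hB i)).
rewrite sum_rot3 exchange_big; apply: eq_bigr => l _.
transitivity (\sum_j sw (D (Z (b l))) (fun w1 w2 => G (b j) w1 * pair2 (c j) (c l) (D w2))).
  apply: eq_bigr => j _.
  have hP : lin (fun w => pair2 (c j) (c l) (D w)) by move=> r u v; apply: (Dlin (F := fun a b => c j a * c l b)); linT.
  under eq_sw => w1 w2 do rewrite (expand w2 hP) mulr_sumr.
  rewrite swE exchange_big; apply: eq_bigr => i _ /=.
  by rewrite swE mulr_sumr; apply: eq_bigr => p _; ring.
rewrite swE exchange_big /=.
apply: eq_bigr => q _; rewrite swE.
rewrite /pair2.
under eq_bigr => j _ do rewrite mulr_sumr.
rewrite exchange_big; apply: eq_bigr => p _ /=.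
rewrite (expand p.1 (G1 q.1)) mulr_suml; apply: eq_bigr => j _; ring.
Qed.



Definition lamf x := \sum_i c i (x * S (S (b i))).
Lemma lam_lin : lin lamf. Proof. rewrite /lamf; linT. Qed.

Lemma lamI (g : {scalar H}) x : sw (D x) (fun u v => g u * lamf v) = g 1 * lamf x.
Proof.
transitivity (\sum_i sw (D x) (fun u v => g u * c i (v * S (S (b i))))).
  rewrite /lamf /sw; under eq_bigr => p _ do rewrite mulr_sumr.
  by rewrite exchange_big.
transitivity (\sum_i sw (D (b i)) (fun u v => sw (D (x * S (S v))) (fun w1 w2 => g (w1 * S u) * c i w2))).
  by apply: eq_bigr => i _; rewrite compat Santi //; linT.
rewrite (trace_step (Z := fun v => x * S (S v)) (G := fun u w1 => g (w1 * S u))); [| linHT | linT].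
rewrite /lamf mulr_sumr; apply: eq_bigr => l _.
rewrite -(coassoc _ (F := fun z1 y1 y2 => g (z1 * S y1) * c l y2)); last linT.
transitivity (sw (D (x * S (S (b l)))) (fun q y2 => eps q * (g 1 * c l y2))).
  apply: eq_sw => q y2.
  by rewrite (antip_r q (G := fun w => g w * c l y2)); last linT.
by rewrite (counit_l _ (G := fun y2 => g 1 * c l y2)) //; linT.
Qed.



Definition lam : {scalar H} := mksc lam_lin.
Lemma lamIl g (hg : lin g) x : sw (D x) (fun u v => g u * lam v) = g 1 * lam x.
Proof. exact: (lamI (mksc hg) x). Qed.

Lemma swDZ G a u : bilin G -> sw (D (a *: u)) G = a * sw (D u) G.
Proof. by move=> hG; rewrite (lin_scaleE _ _ (Dlin hG)). Qed.

Variable t : H.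
Hypothesis htl : forall a, a * t = eps a *: t.
Hypothesis htr : forall a, t * a = eps a *: t.
Hypothesis het : eps t = 1.

Lemma I1 F a : bilin F -> sw (D t) (fun u v => F u (a * v)) = sw (D t) (fun u v => F (S a * u) v).
Proof.
move=> hF.
rewrite -(counit_l a (G := fun w => sw (D t) (fun u v => F u (w * v)))); last linT.
transitivity (sw (D a) (fun a1 a2 => sw (D a1) (fun m m' => sw (D t) (fun u v => F (S m * m' * u) (a2 * v))))).
  apply: eq_sw => a1 a2.
  rewrite (antip_l a1 (G := fun w => sw (D t) (fun u v => F (w * u) (a2 * v)))); last linT.
  by congr (_ * _); apply: eq_sw => u v; rewrite mul1r.
rewrite (coassoc a (F := fun m m' a2 => sw (D t) (fun u v => F (S m * m' * u) (a2 * v)))); last linT.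
transitivity (sw (D a) (fun m r => sw (D t) (fun u v => F (S m * u) v) * eps r)); last first.
  by rewrite (counit_r a (G := fun m => sw (D t) (fun u v => F (S m * u) v))) //; linT.
apply: eq_sw => m r.
transitivity (sw (D (r * t)) (fun u v => F (S m * u) v)).
  rewrite Dmul; last linT.
  by apply: eq_sw => m' a2; apply: eq_sw => u v; rewrite mulrA.
rewrite htl swDZ; [by rewrite mulrC | linT].
Qed.



Lemma I2 F a : bilin F -> sw (D t) (fun u v => F (u * a) v) = sw (D t) (fun u v => F u (v * S a)).
Proof.
move=> hF.
rewrite -(counit_r a (G := fun w => sw (D t) (fun u v => F (u * w) v))); last linT.
transitivity (sw (D a) (fun a1 a2 => sw (D a2) (fun m m' => sw (D t) (fun u v => F (u * a1) (v * (m * S m')))))).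
  apply: eq_sw => a1 a2.
  rewrite (antip_r a2 (G := fun w => sw (D t) (fun u v => F (u * a1) (v * w)))); last linT.
  by rewrite mulrC; congr (_ * _); apply: eq_sw => u v; rewrite mulr1.
rewrite -(coassoc a (F := fun a1 m m' => sw (D t) (fun u v => F (u * a1) (v * (m * S m'))))); last linT.
transitivity (sw (D a) (fun p m' => eps p * sw (D t) (fun u v => F u (v * S m')))); last first.
  by rewrite (counit_l a (G := fun m' => sw (D t) (fun u v => F u (v * S m')))) //; linT.
apply: eq_sw => p m'.
transitivity (sw (D (t * p)) (fun u v => F u (v * S m'))).
  rewrite Dmul; last linT.
  by rewrite sw_exch; apply: eq_sw => a1 m; apply: eq_sw => u v; rewrite mulrA.
rewrite htr swDZ; [by [] | linT].
Qed.

Lemma lam_t : lam t = 1.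
Proof.
rewrite mkscE /lamf.
transitivity (\sum_i c i t * eps (b i)).
  by apply: eq_bigr => i _; rewrite htr linearZ /= !epsS mulrC.
by rewrite -(expand t (lin_sc eps)).
Qed.

Lemma Bk f y : lin f -> sw (D t) (fun u v => f (S u) * lam (v * y)) = f y.
Proof.
move=> hf.
transitivity (sw (D t) (fun u v => sw (D v) (fun a a' => sw (D y) (fun d d' => f (S u * (a * d)) * lam (a' * d'))))).
  apply: eq_sw => u v.
  have hg : lin (fun w => f (S u * w)) by linT.
  rewrite -{1}[S u]mulr1 -(lamIl hg (v * y)) Dmul //; linT.
rewrite -(coassoc t (F := fun u a a' => sw (D y) (fun d d' => f (S u * (a * d)) * lam (a' * d')))); last linT.
transitivity (sw (D t) (fun p a' => eps p * sw (D y) (fun d d' => f d * lam (a' * d')))).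
  apply: eq_sw => p a'.
  under eq_sw => u a do under eq_sw => d d' do rewrite mulrA.
  rewrite (antip_l p (G := fun w => sw (D y) (fun d d' => f (w * d) * lam (a' * d')))); last linT.
  by congr (_ * _); apply: eq_sw => d d'; rewrite mul1r.
rewrite (counit_l t (G := fun a' => sw (D y) (fun d d' => f d * lam (a' * d')))); last linT.
transitivity (sw (D y) (fun d d' => f d * eps d')).
  by apply: eq_sw => d d'; by rewrite htr linearZ lam_t /= mulr1.
by rewrite (counit_r y hf).
Qed.



Lemma Ck f a : lin f -> sw (D t) (fun u v => f u * lam (v * S a)) = f a.
Proof.
move=> hf; rewrite -(I2 a (F := fun u v => f u * lam v)); last linT.
have hg : lin (fun w => f (w * a)) by linT.
by rewrite (lamIl hg t) lam_t mul1r mulr1.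
Qed.

Lemma Dk f x : lin f -> sw (D t) (fun u v => f u * lam (x * v)) = f (S x).
Proof.
move=> hf; rewrite (I1 x (F := fun u v => f u * lam v)); last linT.
have hg : lin (fun w => f (S x * w)) by linT.
by rewrite (lamIl hg t) lam_t mulr1 mulr1.
Qed.

Lemma frob_surj (g : {scalar H}) : exists x, forall y, lam (x * y) = g y.
Proof.
exists (\sum_(p <- D t) g (S p.1) *: p.2) => y.
rewrite -(Bk y (lin_sc g)) mulr_suml linear_sum; apply: eq_bigr => p _.
by rewrite -scalerAl linearZ.
Qed.

Lemma frob_inj x x' : (forall y, lam (x * y) = lam (x' * y)) -> x = x'.
Proof.
move=> e; apply: sep => i.
pose g' := fun w => sw (D t) (fun u v => c i u * lam (v * w)).
have hg' : lin g' by rewrite /g'; linT.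
have key : forall z, c i z = lam (z * \sum_(p <- D t) g' p.1 *: p.2).
  move=> z; rewrite -(Ck z (lin_sc (c i))) -/(g' (S z)) -(Dk z hg').
  rewrite mulr_sumr linear_sum; apply: eq_bigr => p _.
  by rewrite -scalerAr linearZ.
by rewrite !key e.
Qed.



Lemma main_sec : exists φ : {scalar H}, frobenius_hom φ /\ left_integral D φ.
Proof.
exists lam; split; first by split; [exact: frob_inj | exact: frob_surj].
move=> g h; exact: lamI.
Qed.

End Basic.

Section Sep.
Variables (k : comNzRingType) (H : algType k).
Variables (n : nat) (b : 'I_n -> H) (c : 'I_n -> {scalar H}).
Hypothesis db : forall x, x = \sum_i c i x *: b i.
Variable (eps : {scalar H}).
Hypothesis hem : forall x y : H, eps (x * y) = eps x * eps y.
Hypothesis he1 : eps 1 = 1.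

Lemma sep_t (e : seq (H * H)) : \sum_(p <- e) p.1 * p.2 = 1 ->
  (forall (a : H) (f g : {scalar H}),
      pair2 f g [seq (a * p.1, p.2) | p <- e] = pair2 f g [seq (p.1, p.2 * a) | p <- e]) ->
  exists t, [/\ forall a, a * t = eps a *: t, forall a, t * a = eps a *: t & eps t = 1].
Proof.
move=> e1 ec.
have ec' : forall a (f g : {scalar H}), \sum_(p <- e) f (a * p.1) * g p.2 = \sum_(p <- e) f p.1 * g (p.2 * a).
  by move=> a f g; have := ec a f g; rewrite /pair2 !big_map.
pose t := \sum_(p <- e) eps p.2 *: p.1; pose t' := \sum_(p <- e) eps p.1 *: p.2.
have hl : forall a, a * t = eps a *: t.
  move=> a; apply: (sep db) => i.
  transitivity (\sum_(p <- e) c i (a * p.1) * eps p.2).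
    rewrite /t mulr_sumr linear_sum; apply: eq_bigr => p _.
    by rewrite -scalerAr linearZ /= mulrC.
  rewrite ec' linearZ /t linear_sum /= mulr_sumr; apply: eq_bigr => p _.
  by rewrite linearZ hem /=; ring.
have hr : forall a, t' * a = eps a *: t'.
  move=> a; apply: (sep db) => i.
  transitivity (\sum_(p <- e) eps p.1 * c i (p.2 * a)).
    rewrite /t' mulr_suml linear_sum; apply: eq_bigr => p _.
    by rewrite -scalerAl linearZ.
  rewrite -ec' linearZ /t' linear_sum /= mulr_sumr; apply: eq_bigr => p _.
  by rewrite linearZ hem /=; ring.
have het : eps t = 1.
  rewrite /t linear_sum -he1 -e1 linear_sum; apply: eq_bigr => p _.
  by rewrite linearZ hem /= mulrC.
have het' : eps t' = 1.
  rewrite /t' linear_sum -he1 -e1 linear_sum; apply: eq_bigr => p _.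
  by rewrite linearZ hem.
have tt' : t = t'.
  have := hl t'; rewrite het' scale1r hr het scale1r => <- //.
exists t; split=> // a.
by rewrite tt' hr.
Qed.
End Sep.

Lemma dual_basis (k : comNzRingType) (H : algType k) : fgp H ->
  exists n (b : 'I_n -> H) (c : 'I_n -> {scalar H}), forall x, x = \sum_i c i x *: b i.
Proof.
case=> [[s hs] hp].
pose pif := fun v : 'rV[k]_(size s) => \sum_i v 0 i *: s`_i.
have pil : linear pif.
  move=> a u v; rewrite /pif scaler_sumr -big_split; apply: eq_bigr => i _.
  by rewrite !mxE scalerDl scalerA.
pose pi : {linear 'rV[k]_(size s) -> H} := HB.pack pif (GRing.isLinear.Build k _ _ *:%R pif pil).
have idlin : linear (@id H) by [].
pose idl : {linear H -> H} := HB.pack (@id H) (GRing.isLinear.Build k H H *:%R id idlin).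
have surj : forall x : H, exists v, pi v = idl x.
  move=> x; have [cf ->] := hs x; exists (\row_i cf i).
  by rewrite /= /pif; apply: eq_bigr => i _; rewrite mxE.
have [g hg] := hp _ _ pi idl surj.
have prf : forall i, lin (fun x => g x 0 i).
  by move=> i a u v; rewrite linearP !mxE.
exists (size s), (fun i => s`_i), (fun i => mksc (prf i)) => x.
by rewrite -[x in LHS]/(idl x) -hg.
Qed.

Unset Implicit Arguments.
Theorem corollary6p3 (k : comNzRingType) (H : algType k)
    (comul : H -> seq (H * H)) (counit : {scalar H}) (antipode : {linear H -> H}) :
  is_hopf comul counit antipode -> fgp H -> separable_alg H -> FH_alg comul.
Proof.
move=> [hDlin hcoass hcounit [hDmul [hD1 [hem he1]]] hS] hfgp [e [e1 ec]].
have [n [b [c db]]] := dual_basis hfgp.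
have [t [htl htr het]] := sep_t db hem he1 e1 ec.
have [φ [hφ hli]] := main_sec db hDlin hcoass hcounit hDmul hD1 hem he1 hS htl htr het.
by split; [split=> //; exists φ | exists φ].
Qed.
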